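(* Let $0<k<n$ and let $\mu=\delta_n\cdots\delta_{k+1}:[k]\to[n]$ be the face operator $i\mapsto i$. Let $X$ be the pushout of $\Delta[0]\leftarrow\Delta[k]\xrightarrow{\mu}\Delta[n]$, i.e. $\Delta[n]$ with the face spanned by the vertices $0,\dots,k$ collapsed to a point. Then $DX\cong\Delta[n-k]$; more precisely, the map $X\to\Delta[n-k]$ induced by the order-preserving surjection $[n]\to[n-k]$ sending $0,\dots,k$ to $0$ and $i$ to $i-k$ for $i>k$ is, up to isomorphism, $\eta_X$.
   Context: $\delta_j:[n-1]\to[n]$ is the elementary face operator omitting $j$. A simplicial set is non-singular if every non-degenerate simplex has degreewise injective representing map. The desingularization $DX$ is the image of $X\to\prod_f Y$, $x\mapsto(f(x))_f$, over all quotient maps $f:X\to Y$ (maps $X\to X/R$ for operator-compatible families of equivalence relations) with $Y$ non-singular; $\eta_X:X\to DX$ is the corestriction. *)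

(* Defs.v *)
From Stdlib Require Import FunctionalExtensionality PropExtensionality ProofIrrelevance.
From HB Require Import structures.
From mathcomp Require Import all_boot.
Set Implicit Arguments. Unset Strict Implicit. Unset Printing Implicit Defensive.

Definition monob m n (f : {ffun 'I_m.+1 -> 'I_n.+1}) :=
  [forall i : 'I_m.+1, forall j : 'I_m.+1, (i <= j) ==> (f i <= f j)].

Record op (m n : nat) := Op { opf :> {ffun 'I_m.+1 -> 'I_n.+1}; opP : monob opf }.
HB.instance Definition _ m n := [isSub for @opf m n].
HB.instance Definition _ m n := [Equality of op m n by <:].

Lemma monobP m n (f : {ffun 'I_m.+1 -> 'I_n.+1}) :
  reflect (forall i j : 'I_m.+1, i <= j -> f i <= f j) (monob f).
Proof.
apply: (iffP forallP) => [H i j hij | H i].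
  by have := forallP (H i) j; rewrite hij.
by apply/forallP => j; apply/implyP; apply: H.
Qed.

Lemma idop_mono n : monob [ffun i : 'I_n.+1 => i].
Proof. by apply/monobP => i j; rewrite !ffunE. Qed.
Definition idop n : op n n := Op (idop_mono n).

Lemma ocomp_mono l m n (g : op m n) (f : op l m) : monob [ffun i => g (f i)].
Proof.
apply/monobP => i j hij; rewrite !ffunE.
by apply: (monobP _ (opP g)); apply: (monobP _ (opP f)).
Qed.
Definition ocomp l m n (g : op m n) (f : op l m) : op l n := Op (ocomp_mono g f).

Lemma comp_idr m n (f : op m n) : ocomp f (idop m) = f.
Proof. by apply: val_inj; apply/ffunP => i; rewrite /= !ffunE. Qed.
Lemma compA a b c d (h : op c d) (g : op b c) (f : op a b) :
  ocomp h (ocomp g f) = ocomp (ocomp h g) f.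
Proof. by apply: val_inj; apply/ffunP => i; rewrite /= !ffunE. Qed.

Unset Implicit Arguments.
Record sSet := SSet {
  sx :> nat -> Type;
  act : forall m n, op m n -> sx n -> sx m;
  act_id : forall n (x : sx n), act n n (idop n) x = x;
  act_comp : forall l m n (g : op m n) (f : op l m) (x : sx n),
      act l n (ocomp g f) x = act l m f (act m n g x) }.
Set Implicit Arguments.
Arguments act {s m n}.

Unset Implicit Arguments.
Record sMap (X Y : sSet) := SMap {
  smap :> forall n, X n -> Y n;
  smapP : forall m n (th : op m n) (x : X n), smap m (act th x) = act th (smap n x) }.
Set Implicit Arguments.
Arguments smap {X Y} s {n}.

Definition degenerate (X : sSet) n (x : X n) : Prop :=
  exists m (s : op n m), m < n /\ (forall j : 'I_m.+1, exists i, s i = j) /\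
    exists y : X m, x = act s y.

(* the representing map Delta[n] -> X of x is degreewise injective *)
Definition rep_injective (X : sSet) n (x : X n) : Prop :=
  forall m (a b : op m n), act a x = act b x -> a = b.

Definition nonsingular (X : sSet) : Prop :=
  forall n (x : X n), ~ degenerate x -> rep_injective x.

Unset Implicit Arguments.
Record qrel (X : sSet) := QRel {
  rel :> forall n, X n -> X n -> Prop;
  rel_refl : forall n x, rel n x x;
  rel_sym : forall n x y, rel n x y -> rel n y x;
  rel_trans : forall n x y z, rel n x y -> rel n y z -> rel n x z;
  rel_act : forall m n (th : op m n) x y, rel n x y -> rel m (act th x) (act th y) }.

Set Implicit Arguments.
(* quotient X/R: simplices are the equivalence classes *)
Definition qsx (X : sSet) (R : qrel X) n := { P : X n -> Prop | exists x, P = R n x }.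

Lemma qsx_eq (X : sSet) (R : qrel X) n (P Q : qsx R n) : sval P = sval Q -> P = Q.
Proof.
case: P Q => P hP [Q hQ] /= e; subst Q; f_equal; apply: proof_irrelevance.
Qed.

Lemma qact_lem (X : sSet) (R : qrel X) m n (th : op m n) (P : X n -> Prop) x0 :
  P = R n x0 -> (fun z => exists x, P x /\ R m (act th x) z) = R m (act th x0).
Proof.
move=> ->; apply: functional_extensionality => z; apply: propositional_extensionality.
split=> [[x [h1 h2]]|h]; last by exists x0; split=> //; apply: rel_refl.
by apply: rel_trans h2; apply: rel_act.
Qed.

Lemma qact_proof (X : sSet) (R : qrel X) m n (th : op m n) (P : qsx R n) :
  exists x, (fun z => exists x, sval P x /\ R m (act th x) z) = R m x.
Proof. by case: P => P [x0 e] /=; exists (act th x0); apply: qact_lem. Qed.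

Definition qact (X : sSet) (R : qrel X) m n (th : op m n) (P : qsx R n) : qsx R m :=
  exist _ _ (qact_proof th P).

Definition cls (X : sSet) (R : qrel X) n (x : X n) : qsx R n :=
  exist _ (R n x) (ex_intro _ x erefl).

Lemma qact_cls (X : sSet) (R : qrel X) m n (th : op m n) (x : X n) :
  qact th (cls R x) = cls R (act th x).
Proof. by apply: qsx_eq; rewrite /= (qact_lem th (erefl (R n x))). Qed.

Lemma qact_val (X : sSet) (R : qrel X) m n (th : op m n) (P : qsx R n) x0 :
  sval P = R n x0 -> sval (qact th P) = R m (act th x0).
Proof. by move=> e; rewrite /= (qact_lem th e). Qed.

Lemma qact_id (X : sSet) (R : qrel X) n (P : qsx R n) : qact (idop n) P = P.
Proof.
apply: qsx_eq; case: P => P [x0 e] /=.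
by rewrite (qact_lem (idop n) e) act_id e.
Qed.

Lemma qact_comp (X : sSet) (R : qrel X) l m n (g : op m n) (f : op l m) (P : qsx R n) :
  qact (ocomp g f) P = qact f (qact g P).
Proof.
apply: qsx_eq; case: P => P [x0 e].
rewrite (qact_val (ocomp g f) (P := exist _ P (ex_intro _ x0 e)) e).
by rewrite (qact_val f (qact_val g (P := exist _ P (ex_intro _ x0 e)) e)) act_comp.
Qed.

Definition quot (X : sSet) (R : qrel X) : sSet :=
  @SSet (qsx R) (@qact X R) (@qact_id X R) (@qact_comp X R).

(* index set: quotient maps X -> X/R with X/R non-singular *)
Definition NSQ (X : sSet) := { R : qrel X | nonsingular (quot R) }.

Definition eta0 (X : sSet) n (x : X n) : forall Q : NSQ X, quot (sval Q) n :=
  fun Q => cls (sval Q) x.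

(* DX = image of x |-> (f(x))_f in the product *)
Definition Dsx (X : sSet) n := { p : forall Q : NSQ X, quot (sval Q) n | exists x : X n, p = eta0 x }.

Lemma Dsx_eq (X : sSet) n (p q : Dsx X n) : sval p = sval q -> p = q.
Proof.
case: p q => p hp [q hq] /= e; subst q; f_equal; apply: proof_irrelevance.
Qed.

Lemma Dact_proof (X : sSet) m n (th : op m n) (p : Dsx X n) :
  exists x : X m, (fun Q : NSQ X => act th (sval p Q)) = eta0 x.
Proof.
case: p => p [x e] /=; exists (act th x); subst p.
by apply: functional_extensionality_dep => Q; apply: qact_cls.
Qed.

Definition Dact (X : sSet) m n (th : op m n) (p : Dsx X n) : Dsx X m :=
  exist _ _ (Dact_proof th p).

Lemma Dact_id (X : sSet) n (p : Dsx X n) : Dact (idop n) p = p.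
Proof.
apply: Dsx_eq; apply: functional_extensionality_dep => Q /=; exact: qact_id.
Qed.

Lemma Dact_comp (X : sSet) l m n (g : op m n) (f : op l m) (p : Dsx X n) :
  Dact (ocomp g f) p = Dact f (Dact g p).
Proof.
apply: Dsx_eq; apply: functional_extensionality_dep => Q /=; exact: qact_comp.
Qed.

Definition D (X : sSet) : sSet := @SSet (Dsx X) (@Dact X) (@Dact_id X) (@Dact_comp X).

Definition eta_fun (X : sSet) n (x : X n) : D X n := exist _ (eta0 x) (ex_intro _ x erefl).

Lemma eta_nat (X : sSet) m n (th : op m n) (x : X n) :
  eta_fun (act th x) = act th (eta_fun x).
Proof.
apply: Dsx_eq; apply: functional_extensionality_dep => Q /=.
by rewrite /eta0 qact_cls.
Qed.

Definition etaX (X : sSet) : sMap X (D X) := @SMap X (D X) (@eta_fun X) (@eta_nat X).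

Lemma Delta_id n m (f : op m n) : ocomp f (idop m) = f.
Proof. exact: comp_idr. Qed.
Lemma Delta_comp n l m p (g : op m p) (f : op l m) (x : op p n) :
  ocomp x (ocomp g f) = ocomp (ocomp x g) f.
Proof. exact: compA. Qed.

Definition Delta (n : nat) : sSet :=
  @SSet (fun m => op m n) (fun m p th f => ocomp f th) (@Delta_id n) (@Delta_comp n).

Lemma mu_mono k n (H : k <= n) :
  monob [ffun i : 'I_k.+1 => widen_ord (H : k.+1 <= n.+1) i].
Proof. by apply/monobP => i j; rewrite !ffunE. Qed.
Definition mu k n (H : k <= n) : op k n := Op (mu_mono H).

Definition in_face k n (H : k <= n) m (f : op m n) : Prop :=
  exists a : op m k, f = ocomp (mu H) a.

(* the pushout Delta[0] <- Delta[k] -> Delta[n]: identify all simplices in the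
   image of mu (mu is degreewise injective) *)
Definition collapse_rel k n (H : k <= n) m (f g : op m n) : Prop :=
  f = g \/ (in_face H f /\ in_face H g).

Section Collapse.
Variables (k n : nat) (H : k <= n).
Lemma col_refl m (x : op m n) : collapse_rel H x x.
Proof. by left. Qed.
Lemma col_sym m (x y : op m n) : collapse_rel H x y -> collapse_rel H y x.
Proof. by case=> [->|[a b]]; [left|right]. Qed.
Lemma col_trans m (x y z : op m n) :
  collapse_rel H x y -> collapse_rel H y z -> collapse_rel H x z.
Proof.
case=> [->|[a b]] //; case=> [<-|[c d]]; [by right|by right].
Qed.
Lemma col_act m p (th : op m p) (x y : op p n) :
  collapse_rel H x y -> collapse_rel H (ocomp x th) (ocomp y th).
Proof.
case=> [->|[[a ->] [b ->]]]; first by left.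
by right; split; [exists (ocomp a th)|exists (ocomp b th)]; rewrite compA.
Qed.
End Collapse.

Definition collapse k n (H : k <= n) : qrel (Delta n) :=
  @QRel (Delta n) (@collapse_rel k n H) (@col_refl k n H) (@col_sym k n H)
    (@col_trans k n H) (fun m p th x y => @col_act k n H m p th x y).

Definition Xcol k n (H : k <= n) : sSet := quot (collapse H).

Lemma sk_mono k n : monob [ffun i : 'I_n.+1 => (inord (i - k) : 'I_(n - k).+1)].
Proof.
apply/monobP => i j hij; rewrite !ffunE.
have hb (x : 'I_n.+1) : x - k <= n - k by apply: leq_sub2r; rewrite -ltnS.
by rewrite !inordK ?ltnS ?hb // leq_sub2r.
Qed.
Definition sk k n : op n (n - k) := Op (sk_mono k n).

(* Main.v *)
Require Import Defs.
From Stdlib Require Import FunctionalExtensionality PropExtensionality ProofIrrelevance Classical ClassicalEpsilon.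
From HB Require Import structures.
From mathcomp Require Import all_boot zify.
Set Implicit Arguments. Unset Strict Implicit. Unset Printing Implicit Defensive.

Lemma op_ext m n (f g : op m n) : (forall i, f i = g i) -> f = g.
Proof. by move=> h; apply: val_inj; apply/ffunP. Qed.

Lemma ocompE l m n (g : op m n) (f : op l m) i : ocomp g f i = g (f i).
Proof. by rewrite /ocomp /= ffunE. Qed.

Lemma comp_idl m n (f : op m n) : ocomp (idop n) f = f.
Proof. by apply: op_ext => i; rewrite ocompE /= ffunE. Qed.

Definition qrep (X : sSet) (R : qrel X) n (P : qsx R n) : X n :=
  proj1_sig (constructive_indefinite_description _ (proj2_sig P)).
Lemma qrepP (X : sSet) (R : qrel X) n (P : qsx R n) : sval P = R n (qrep P).
Proof. by rewrite /qrep; case: constructive_indefinite_description. Qed.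
Lemma qrep_cls (X : sSet) (R : qrel X) n (P : qsx R n) : P = cls R (qrep P).
Proof. by apply: qsx_eq; exact: qrepP. Qed.
Lemma cls_eq (X : sSet) (R : qrel X) n (x y : X n) : cls R x = cls R y -> R n x y.
Proof. move/(f_equal sval) => /= ->; exact: rel_refl. Qed.
Lemma cls_eq' (X : sSet) (R : qrel X) n (x y : X n) : R n x y -> cls R x = cls R y.
Proof.
move=> h; apply: qsx_eq => /=; apply: functional_extensionality => z.
apply: propositional_extensionality; split=> h2.
  by apply: rel_trans h2; apply: rel_sym.
by apply: rel_trans h2.
Qed.
Lemma rel_of_rep (X : sSet) (R : qrel X) n x (P : qsx R n) :
  sval P = R n x -> R n x (qrep P).
Proof. by rewrite qrepP => <-; apply: rel_refl. Qed.

Lemma EZ (Y : sSet) : nonsingular Y -> forall N (z : Y N),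
  exists p (s : op N p) (y : Y p), z = act s y /\ rep_injective y.
Proof.
move=> ns; elim/ltn_ind => N IH z.
case: (classic (degenerate z)) => [[m [s [hm [_ [y ->]]]]] | nd].
  have [p [s2 [y2 [-> inj]]]] := IH m hm y.
  by exists p, (ocomp s2 s), y2; rewrite act_comp.
by exists N, (idop N), z; rewrite act_id; split=> //; apply: ns.
Qed.

Lemma adjacent m N (f : op m N) (a b : 'I_m.+1) : a < b -> f a = f b ->
  a < m /\ f (inord a) = f (inord a.+1).
Proof.
move=> hab e; have am : a < m by have := ltn_ord b; lia.
split=> //; rewrite inord_val.
have h1 : f a <= f (inord a.+1) by apply: (monobP _ (opP f)); rewrite inordK //; lia.
have h2 : f (inord a.+1) <= f b by apply: (monobP _ (opP f)); rewrite inordK //; lia.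
rewrite -e in h2; apply: val_inj; apply/eqP; by rewrite eqn_leq h1 h2.
Qed.

Section Deg.
Variables (m' i : nat) (Hi : i < m'.+1).

Lemma sdeg_mono : monob [ffun j : 'I_m'.+2 => (inord (if j <= i then (j : nat) else j.-1) : 'I_m'.+1)].
Proof.
apply/monobP => a b hab; rewrite !ffunE.
have := ltn_ord a; have := ltn_ord b => ha hb.
case: (leqP a i) => h1; case: (leqP b i) => h2; rewrite !inordK; lia.
Qed.
Definition sdeg : op m'.+1 m' := Op sdeg_mono.

Variables (N : nat) (f : op m'.+1 N).
Lemma gdeg_mono : monob [ffun j : 'I_m'.+1 => f (inord (if j <= i then (j : nat) else j.+1))].
Proof.
apply/monobP => a b hab; rewrite !ffunE; apply: (monobP _ (opP f)).
have := ltn_ord a; have := ltn_ord b => ha hb.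
case: (leqP a i) => h1; case: (leqP b i) => h2; rewrite !inordK; lia.
Qed.
Definition gdeg : op m' N := Op gdeg_mono.

Lemma gdeg_sdeg : f (inord i) = f (inord i.+1) -> ocomp gdeg sdeg = f.
Proof.
move=> e; apply: op_ext => j; rewrite ocompE /= !ffunE.
have := ltn_ord j => hj.
case: (leqP j i) => h1.
  rewrite inordK; last lia.
  rewrite h1; congr (f _); apply: val_inj; rewrite /= inordK //; lia.
rewrite inordK; last lia.
case: (leqP j.-1 i) => h2.
  have ej : (j : nat) = i.+1 by lia.
  rewrite ej /= e; congr (f _); apply: val_inj; rewrite /= inordK; lia.
congr (f _); apply: val_inj; rewrite /= inordK; lia.
Qed.

Lemma sdeg_surj (j : 'I_m'.+1) : exists x, sdeg x = j.
Proof.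
exists (inord (if j <= i then (j : nat) else j.+1)); apply: val_inj; rewrite /= ffunE.
have := ltn_ord j => hj.
case: (leqP j i) => h1; rewrite !inordK; try lia; case: ifP; lia.
Qed.
End Deg.

Section Main.
Variables (k n : nat) (H : k <= n).
Local Notation X := (Xcol H).
Local Notation col := (collapse H).

Lemma col_sk m (f g : op m n) : collapse_rel H f g -> ocomp (sk k n) f = ocomp (sk k n) g.
Proof.
case=> [->|[[a ->] [b ->]]] //; apply: op_ext => i; rewrite !ocompE.
apply: val_inj; rewrite /= !ffunE /= !inordK.
- by have := ltn_ord (a i); have := ltn_ord (b i); lia.
- by have := ltn_ord (b i); lia.
- by have := ltn_ord (a i); lia.
Qed.

Definition F m (P : X m) : op m (n - k) := ocomp (sk k n) (qrep P).

Lemma F_val m (P : X m) th : sval P = col m th -> F P = ocomp (sk k n) th.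
Proof. by move=> e; symmetry; apply: col_sk; apply: (rel_of_rep e). Qed.

Lemma F_cls m (th : op m n) : F (cls col th) = ocomp (sk k n) th.
Proof. exact: F_val. Qed.

Lemma F_act m p (th : op m p) (P : X p) : F (act th P) = ocomp (F P) th.
Proof.
rewrite (F_val (qact_val th (qrepP P))) /F.
exact: (Defs.compA (sk k n) (qrep P) th).
Qed.

Definition R0 : qrel X.
refine (@QRel X (fun m P Q => F P = F Q) _ _ _ _).
- by [].
- by move=> ? ? ? ->.
- by move=> ? ? ? ? -> ->.
- by move=> m p th x y e; rewrite !F_act e.
Defined.

Local Notation Y := (quot R0).

Definition G m (C : Y m) : op m (n - k) := F (qrep C).

Lemma G_cls m (P : X m) : G (cls R0 P) = F P.
Proof. by symmetry; apply: (@rel_of_rep X R0 m P (cls R0 P)). Qed.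

Lemma G_inj m (C C' : Y m) : G C = G C' -> C = C'.
Proof. by move=> e; rewrite (qrep_cls C) (qrep_cls C'); apply: cls_eq'. Qed.

Lemma G_act m p (th : op m p) (C : Y p) : G (act th C) = ocomp (G C) th.
Proof.
rewrite {1}(qrep_cls C) /= qact_cls G_cls F_act //.
Qed.

Lemma sect_mono : monob [ffun j : 'I_(n - k).+1 => (inord (j + k) : 'I_n.+1)].
Proof.
apply/monobP => i j hij; rewrite !ffunE !inordK; try lia.
- by have := ltn_ord j; lia.
- by have := ltn_ord i; lia.
Qed.
Definition sect : op (n - k) n := Op sect_mono.

Lemma sk_sect : ocomp (sk k n) sect = idop (n - k).
Proof.
apply: op_ext => j; rewrite ocompE; apply: val_inj; rewrite /= !ffunE /= !inordK //.
all: have := ltn_ord j; lia.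
Qed.

Lemma G_surj m (g : op m (n - k)) : G (cls R0 (cls col (ocomp sect g))) = g.
Proof. by rewrite G_cls F_cls Defs.compA sk_sect comp_idl. Qed.

Lemma G_degen N' (x : Y N'.+1) i : i < N'.+1 ->
  G x (inord i) = G x (inord i.+1) -> degenerate x.
Proof.
move=> hi e.
exists N', (sdeg hi); split=> //; split; first exact: sdeg_surj.
exists (cls R0 (cls col (ocomp sect (gdeg hi (G x))))).
apply: G_inj; rewrite G_act G_surj; symmetry; exact: gdeg_sdeg.
Qed.

Lemma Y_ns : nonsingular Y.
Proof.
move=> N x nd m a b e.
have inj : forall u v : 'I_N.+1, G x u = G x v -> u = v.
  case: N x nd a b e => [|N'] x nd a b e u v huv.
    by apply: ord_inj; have := ltn_ord u; have := ltn_ord v; lia.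
  apply: NNPP => ne.
  have [lt|lt] : u < v \/ v < u.
    case: (ltngtP u v) => h; [by left|by right|by case: ne; apply: val_inj].
  - have [hu he] := adjacent lt huv.
    by apply: nd; apply: (G_degen hu he).
  - have [hu he] := adjacent lt (esym huv).
    by apply: nd; apply: (G_degen hu he).
have := f_equal (@G m) e; rewrite !G_act => e2.
apply: op_ext => j; apply: inj.
by rewrite -!ocompE e2.
Qed.

Definition Q0 : NSQ X := exist _ R0 Y_ns.

Lemma cst_mono N (i : 'I_N.+1) : monob [ffun _ : 'I_1 => i].
Proof. by apply/monobP => a b _; rewrite !ffunE. Qed.
Definition cst N (i : 'I_N.+1) : op 0 N := Op (cst_mono i).

Lemma key (R : qrel X) : nonsingular (quot R) -> forall m (th : op m n),
  cls R (cls col (ocomp sect (ocomp (sk k n) th))) = cls R (cls col th).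
Proof.
move=> ns.
pose w : quot R n := cls R (cls col (idop n)).
have clsw : forall m (th : op m n), cls R (cls col th) = act th w.
  by move=> m th; rewrite /w /= qact_cls /= qact_cls /= comp_idl.
have [p [s [y [ew inj]]]] := EZ ns w.
have vert : forall i : 'I_n.+1, i <= k -> s i = s ord0.
  move=> i hi.
  have ec : cls col (cst i) = cls col (cst ord0).
    apply: cls_eq'; right; split.
      exists (cst (inord i : 'I_k.+1)); apply: op_ext => j.
      rewrite ocompE /= !ffunE; apply: val_inj; rewrite /= inordK //.
    exists (cst (ord0 : 'I_k.+1)); apply: op_ext => j.
    by rewrite ocompE /= !ffunE; apply: val_inj.
  have := f_equal (@cls X R 0) ec; rewrite !clsw ew -!act_comp => /inj e.
  by have := f_equal (fun f : op 0 p => f ord0) e; rewrite !ocompE /= !ffunE.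
move=> m th; rewrite !clsw ew -!act_comp; congr (act _ y).
rewrite Defs.compA Defs.compA; congr (ocomp _ th).
apply: op_ext => j; rewrite !ocompE.
have ev : (sect (sk k n j) : nat) = if j <= k then k else j.
  rewrite /= !ffunE /= !inordK; have := ltn_ord j; try (case: ifP); lia.
case: (leqP j k) => hj.
  have hv : sect (sk k n j) <= k by rewrite ev hj.
  by rewrite (vert _ hv) (vert _ hj).
congr (s _); apply: val_inj; rewrite /= ev; case: ifP => //; lia.
Qed.

Definition Drep m (p : D X m) : X m :=
  proj1_sig (constructive_indefinite_description _ (proj2_sig p)).
Lemma DrepP m (p : D X m) : sval p = eta0 (Drep p).
Proof. by rewrite /Drep; case: constructive_indefinite_description. Qed.

Definition psi_fun m (p : D X m) : op m (n - k) := F (Drep p).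

Lemma psi_val m (p : D X m) x : sval p = eta0 x -> psi_fun p = F x.
Proof.
move=> e; have := DrepP p; rewrite e => /(f_equal (fun f => f Q0)) /= /cls_eq.
by move=> ->.
Qed.

Lemma psi_nat m p (th : op m p) (x : D X p) : psi_fun (act th x) = ocomp (psi_fun x) th.
Proof.
have e : sval (act th x) = eta0 (act th (Drep x)).
  rewrite /= DrepP; apply: functional_extensionality_dep => Q; exact: qact_cls.
by rewrite (psi_val e) F_act.
Qed.

Definition psi : sMap (D X) (Delta (n - k)) := @SMap (D X) (Delta (n - k)) psi_fun psi_nat.

Definition psi'_fun m (q : op m (n - k)) : D X m := @eta_fun X m (cls col (ocomp sect q)).

Lemma psi'_nat m p (th : op m p) (q : op p (n - k)) :
  psi'_fun (ocomp q th) = act th (psi'_fun q).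
Proof.
rewrite /psi'_fun -eta_nat /= qact_cls Defs.compA //.
Qed.

Definition psi' : sMap (Delta (n - k)) (D X) :=
  @SMap (Delta (n - k)) (D X) psi'_fun psi'_nat.

Lemma psi_psi' m (q : op m (n - k)) : psi_fun (psi'_fun q) = q.
Proof.
by rewrite (@psi_val m (psi'_fun q) (cls col (ocomp sect q) : X m) erefl) F_cls Defs.compA sk_sect comp_idl.
Qed.

Lemma psi'_psi m (p : D X m) : psi'_fun (psi_fun p) = p.
Proof.
apply: Dsx_eq; rewrite /= DrepP /psi_fun.
rewrite (qrep_cls (Drep p)) F_cls.
apply: functional_extensionality_dep => -[R ns]; rewrite /eta0 /=.
exact: key.
Qed.

End Main.

Theorem mainTheorem8 (k n : nat) (Hk : 0 < k) (Hkn : k < n) :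
  exists (psi : sMap (D (Xcol (ltnW Hkn))) (Delta (n - k)))
         (psi' : sMap (Delta (n - k)) (D (Xcol (ltnW Hkn)))),
    (forall m (p : D (Xcol (ltnW Hkn)) m), smap psi' (smap psi p) = p) /\
    (forall m (q : Delta (n - k) m), smap psi (smap psi' q) = q) /\
    (forall m (th : op m n),
        smap psi (smap (etaX (Xcol (ltnW Hkn))) (cls (collapse (ltnW Hkn)) th))
        = ocomp (sk k n) th).
Proof.
exists (psi (ltnW Hkn)), (psi' (ltnW Hkn)); split; last split.
- by move=> m p; apply: psi'_psi.
- by move=> m q; apply: psi_psi'.
- move=> m th.
  have := @psi_val k n (ltnW Hkn) m (@eta_fun (Xcol (ltnW Hkn)) m (cls (collapse (ltnW Hkn)) th)) _ erefl.
  rewrite F_cls => <-. reflexivity.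
Qed.
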